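(* Let $G$ be a finite simple $2$-connected graph with at least $4$ vertices and $\delta_2(G)\geqslant 4$. Then $G$ contains a chorded cycle.
   Context: $\delta_2(G)$ is the minimum of $|N_G(u)\cup N_G(v)|$ over all pairs of distinct nonadjacent vertices $u,v$ of $G$ (i.e. over independent sets of size 2). A chorded cycle is a cycle together with an edge of the graph, not on the cycle, joining two vertices of the cycle. *)

(* Defs.v *)
From mathcomp Require Import all_boot.
Set Implicit Arguments. Unset Strict Implicit. Unset Printing Implicit Defensive.

Section Graphs.
Variable T : finType.

Definition simple_graph (e : rel T) : Prop := symmetric e /\ irreflexive e.

Definition nbhd (e : rel T) (v : T) : {set T} := [set w | e v w].

Definition induced_rel (e : rel T) (S : {set T}) : rel T :=
  fun x y => [&& x \in S, y \in S & e x y].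

Definition connected_on (e : rel T) (S : {set T}) : Prop :=
  forall x y, x \in S -> y \in S -> connect (induced_rel e S) x y.

Definition two_connected (e : rel T) : Prop :=
  [/\ 3 <= #|T|, connected_on e setT & forall v : T, connected_on e [set~ v]].

Definition delta2_ge (e : rel T) (k : nat) : Prop :=
  forall u v : T, u != v -> ~~ e u v -> k <= #|nbhd e u :|: nbhd e v|.

Definition is_cycle (e : rel T) (c : seq T) : Prop :=
  [/\ 3 <= size c, uniq c & cycle e c].

Definition has_chorded_cycle (e : rel T) : Prop :=
  exists c : seq T, is_cycle e c /\
    exists x y : T, [/\ x \in c, y \in c, e x y, y != next c x & x != next c y].

End Graphs.

(* Main.v *)
Require Import Defs.
From mathcomp Require Import all_boot.
Set Implicit Arguments. Unset Strict Implicit. Unset Printing Implicit Defensive.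
From Stdlib Require Import Classical.

Section S.
Variable T : finType.
Implicit Types (e : rel T).

Lemma next_head (x : T) p : next (x :: p) x = head x p.
Proof. by rewrite next_nth mem_head /= eqxx; case: p. Qed.

Lemma prev_head (x : T) p : x \notin p -> prev (x :: p) x = last x p.
Proof.
move=> xp; rewrite prev_nth mem_head /=.
rewrite memNindex //. elim/last_ind: p xp => [|p y _] //= _.
by rewrite size_rcons /= nth_rcons ltnn eqxx last_rcons.
Qed.

Lemma connect_closed (r : rel T) (A : pred T) x z :
  (forall a b, a \in A -> r a b -> b \in A) -> x \in A -> connect r x z -> z \in A.
Proof.
move=> cl xA /connectP [p pth ->]; elim: p x xA pth => //= y p IH x xA /andP [rxy pth].
exact: IH y (cl _ _ xA rxy) pth.
Qed.

Lemma exists_max_path e : exists s : seq T,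
  [/\ uniq s, sorted e s & forall s', uniq s' -> sorted e s' -> size s' <= size s].
Proof.
pose P n := [exists t : n.-tuple T, uniq t && sorted e t].
have exP : exists n, P n by exists 0; apply/existsP; exists [tuple].
have ubP : forall n, P n -> n <= #|T|.
  move=> n /existsP [t /andP [ut _]]; rewrite -(size_tuple t).
  move/card_uniqP: ut => <-; exact: max_card.
case: (ex_maxnP exP ubP) => n /existsP [t /andP [ut st]] mx.
exists t; split=> // s' us' ss'; rewrite size_tuple; apply: mx.
apply/existsP; exists (in_tuple s'); exact/andP.
Qed.


Lemma endpoint e (se : symmetric e) (ie : irreflexive e) x t :
  uniq (x :: t) -> path e x t ->
  (forall s', uniq s' -> sorted e s' -> size s' <= size (x :: t)) ->
  ~ has_chorded_cycle e ->
  (forall w, e x w -> w \in t) /\ #|nbhd e x| <= 2.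
Proof.
move=> ut pt mx nch.
have sub : forall w, e x w -> w \in t.
  move=> w xw; apply/negPn/negP => wt.
  have wx : w != x by apply/eqP => wx; rewrite wx ie in xw.
  have := mx (w :: x :: t).
  rewrite /= ltnn inE negb_or wx wt se xw pt.
  by move: ut => /= ->; move/(_ isT isT).
split=> //.
rewrite leqNgt; apply/negP => /card_gt2P [a [b [c [[ha hb hc] [hab hbc hca]]]]].
apply: nch; rewrite !inE in ha hb hc.
have [a' [b' [ha' hb' hab' a1 b1]]] : exists a' b',
   [/\ e x a', e x b', a' != b', a' != head x t & b' != head x t].
  case: (eqVneq a (head x t)) => [ea|a1].
    by exists b, c; rewrite -ea; split; rewrite // eq_sym.
  case: (eqVneq b (head x t)) => [eb|b1].
    by exists a, c; rewrite -eb; split; rewrite // eq_sym.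
  by exists a, b.
clear a b c ha hb hc hab hbc hca.
wlog lt : a' b' ha' hb' hab' a1 b1 / index a' t < index b' t.
  move=> W; case: (ltngtP (index a' t) (index b' t)) => h.
  - exact: (W a' b').
  - by apply: (W b' a') => //; rewrite eq_sym.
  - have at' := sub _ ha'; have bt' := sub _ hb'.
    by move: hab'; rewrite -(nth_index x at') h nth_index // eqxx.
have bt := sub _ hb'.
move: ut pt sub a1 b1 lt; case/splitPr: bt => u t2 ut pt sub a1 b1 lt.
have bu : b' \notin u.
  by move: ut => /= /andP [_]; rewrite cat_uniq => /and3P [_ /= /norP [] ].
have au : a' \in u.
  move: lt; rewrite !index_cat (negbTE bu) /= eqxx addn0.
  by case: ifP => // _; rewrite ltnNge leq_addr.
case: u ut pt a1 bu au {b1 lt sub} => [//|c0 u0] ut pt a1 bu au.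
have uc : uniq (x :: rcons (c0 :: u0) b').
  move: ut; rewrite -cat_cons -(cat1s b' t2) catA cat_uniq => /andP [+ _].
  by rewrite cats1.
exists (x :: rcons (c0 :: u0) b'); split.
  split=> //; first by rewrite /= size_rcons.
  rewrite /= rcons_path last_rcons (se b') hb' andbT.
  change (path e x (rcons (c0 :: u0) b')); rewrite rcons_path.
  by move: pt; rewrite cat_path => /andP [-> /= /andP [-> _]].
exists x, a'; split.
- exact: mem_head.
- by rewrite inE mem_rcons inE au !orbT.
- exact: ha'.
- by rewrite next_head /=.
- apply/eqP => h.
  have := prev_next uc a'; rewrite -h prev_head; last by case/andP: uc.
  by rewrite last_rcons => hba; rewrite hba eqxx in hab'.
Qed.


Lemma exists_notin (A : {set T}) : #|A| < #|T| -> exists z, z \notin A.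
Proof.
move=> h; have : 0 < #|~: A| by rewrite -(ltn_add2l #|A|) addn0 cardsC.
by case/card_gt0P => z; rewrite inE => hz; exists z.
Qed.

Lemma card3 (a b c : T) : #|[set a; b; c]| <= 3.
Proof.
rewrite -setUA cardsU1 cards2.
by case: (a \notin _); case: (b != c).
Qed.

Lemma rot_sorted e (se : symmetric e) x L R :
  path e x L -> path e x R -> sorted e (rev (x :: L) ++ R).
Proof.
move=> pL pR.
have : sorted e (rev (x :: L)).
  rewrite rev_sorted; apply: (sub_sorted _ (pL : sorted e (x :: L))) => a b.
  by rewrite se.
rewrite rev_cons; case: (rev L) => [|a l] /=; first by rewrite pR.
by rewrite cat_rcons -cat_rcons cat_path last_rcons pR andbT.
Qed.

Lemma deg2 e (se : symmetric e) (ie : irreflexive e) :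
  two_connected e -> forall v, 2 <= #|nbhd e v|.
Proof.
move=> [n3 conn nocut] v; rewrite leqNgt; apply/negP => h.
have step : forall (S : {set T}) z, v \in S -> z \in S -> z != v ->
    connect (induced_rel e S) v z -> exists w, (w \in S) && e v w.
  move=> S z vS zS zv c.
  case: (boolP [exists w, (w \in S) && e v w]) => [/existsP //|/existsP nw].
  have : z \in pred1 v.
    apply: (connect_closed _ _ c); last by rewrite inE.
    move=> a b; rewrite inE => /eqP -> /and3P [_ bS vb].
    by case: nw; exists b; rewrite bS vb.
  by rewrite inE (negbTE zv).
case: (set_0Vmem (nbhd e v)) => [N0 | [u hu]].
  have [z hz] : exists z, z \notin [set v].
    by apply: exists_notin; rewrite cards1; apply: leq_trans n3.
  rewrite inE in hz.
  have [w /andP [_ vw]] := step setT z (in_setT _) (in_setT _) hz (conn _ _ (in_setT _) (in_setT _)).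
  by have : w \in nbhd e v; [rewrite inE | rewrite N0 inE].
have Nv : forall w, e v w -> w = u.
  move=> w vw; move/card_le1P: h => /(_ _ hu) /(_ w).
  by rewrite inE vw inE => /esym /eqP.
have [z hz] : exists z, z \notin [set u; v].
  apply: exists_notin; apply: leq_ltn_trans n3; rewrite cards2; by case: (u != v).
rewrite !inE negb_or in hz; case/andP: hz => zu zv.
have vu : v != u by apply/eqP => vu; move: hu; rewrite inE vu ie.
have vS : v \in [set~ u] by rewrite !inE.
have zS : z \in [set~ u] by rewrite !inE.
have [w /andP [wS vw]] := step _ z vS zS zv (nocut u _ _ vS zS).
by move: wS; rewrite !inE (Nv _ vw) eqxx.
Qed.

End S.

Theorem corollary2p8 (T : finType) (e : rel T) :
  simple_graph e -> two_connected e -> 4 <= #|T| -> delta2_ge e 4 ->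
  has_chorded_cycle e.
Proof.
move=> [se ie] tc n4 d2.
case: (classic (has_chorded_cycle e)) => // nch; exfalso.
have [s [us ss mx]] := exists_max_path e.
have dg := deg2 se ie tc.
case: tc => [n3 conn nocut].
case: s us ss mx => [|x t] us ss mx.
  have [v _] : exists v : T, v \notin (set0 : {set T}).
    by apply: exists_notin; rewrite cards0; apply: leq_trans n4.
  by have := mx [:: v] isT isT.
have [sub dx] := endpoint se ie us ss mx nch.
have dx2 := dg x.
case: t us ss mx sub dx => [|v1 t1] us ss mx sub dx.
  have : 0 < #|nbhd e x| by apply: leq_trans dx2.
  by case/card_gt0P => w; rewrite inE => /sub.
have xv1 : e x v1 by case/andP: ss.
have [y [xy yv1]] : exists y, e x y /\ y != v1.
  case/card_gt1P: dx2 => a [b [ha hb hab]]; rewrite !inE in ha hb.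
  case: (eqVneq a v1) => [ea|av]; last by exists a.
  by exists b; split=> //; rewrite -ea eq_sym.
have Nx : nbhd e x = [set v1; y].
  apply/eqP; rewrite eq_sym eqEcard cards2 eq_sym yv1 dx andbT.
  by apply/subsetP => w; rewrite !inE => /orP [] /eqP ->.
have yt1 : y \in t1 by move: (sub _ xy); rewrite inE (negbTE yv1).
move: us ss mx sub; case/splitPr: yt1 => u1 t2 us ss mx sub.
change (is_true (path e x ((v1 :: u1) ++ y :: t2))) in ss.
have pL : path e x (v1 :: u1) by move: ss; rewrite cat_path => /andP [].

have pR : path e x (y :: t2).
  move: ss; rewrite cat_path => /andP [_] /= /andP [_ ->]; by rewrite xy.
have sP := rot_sorted se pL pR.
have pP : perm_eq (x :: (v1 :: u1) ++ y :: t2) (rev (x :: v1 :: u1) ++ y :: t2).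
  by rewrite -cat_cons perm_cat2r perm_sym perm_rev.
have uP : uniq (rev (x :: v1 :: u1) ++ y :: t2) by rewrite -(perm_uniq pP).
have mxP : forall s', uniq s' -> sorted e s' ->
    size s' <= size (rev (x :: v1 :: u1) ++ y :: t2).
  by rewrite -(perm_size pP).
have xL : x \notin (v1 :: u1) ++ y :: t2 by case/andP: us.
have uLR : uniq ((v1 :: u1) ++ y :: t2) by case/andP: us.
have yL : y \notin v1 :: u1.
  by move: uLR; rewrite cat_uniq => /and3P [_ /= /norP [] ].
have uL : uniq (v1 :: u1) by move: uLR; rewrite cat_uniq => /and3P [].
case/lastP: u1 us ss mx sub pL pR sP pP uP mxP xL uLR yL uL =>
   [|u'' w] us ss mx sub pL pR sP pP uP mxP xL uLR yL uL.
  have E : rev [:: x; v1] ++ y :: t2 = v1 :: x :: y :: t2 by [].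
  rewrite E in uP sP mxP.
  have [_ dv1] := endpoint se ie uP sP mxP nch.
  have xy' : x != y by apply/eqP => exy; rewrite exy ie in xy.
  have v1y : e v1 y by move: ss => /= /and3P [].
  have Nv1 : nbhd e v1 = [set x; y].
    apply/eqP; rewrite eq_sym eqEcard cards2 xy' dv1 andbT.
    by apply/subsetP => q; rewrite !inE => /orP [] /eqP ->; rewrite // se.
  have [z hz] : exists z, z \notin [set x; v1; y].
    by apply: exists_notin; apply: leq_ltn_trans (card3 _ _ _) n4.
  have xS : x \in [set~ y] by rewrite !inE.
  have zS : z \in [set~ y] by move: hz; rewrite !inE !negb_or => /andP [_ ->].
  have : z \in [set x; v1].
    apply: (connect_closed _ _ (nocut y _ _ xS zS)); last by rewrite !inE eqxx.
    move=> a b; rewrite !inE => /orP [] /eqP -> /and3P [_ bS hb].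
    - have : b \in nbhd e x by rewrite inE.
      by rewrite Nx !inE; move: bS; rewrite !inE => /negbTE ->; rewrite orbF => ->; rewrite orbT.
    - have : b \in nbhd e v1 by rewrite inE.
      by rewrite Nv1 !inE; move: bS; rewrite !inE => /negbTE ->; rewrite orbF => ->.
  by move: hz; rewrite !inE !negb_or => /andP [/andP [/negbTE -> /negbTE ->] _].
have E : rev (x :: v1 :: rcons u'' w) ++ y :: t2 = w :: (rev (x :: v1 :: u'') ++ y :: t2).
  by rewrite -!rcons_cons rev_rcons.
rewrite E in uP sP mxP.
have [_ dw] := endpoint se ie uP sP mxP nch.
set z := last v1 u''.
have [wz wy] : e w z /\ e w y.
  move: ss; rewrite cat_path => /andP [p1 p2].
  move: p1 => /= /andP [_]; rewrite rcons_path => /andP [_ zw].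
  move: p2; rewrite /= last_rcons => /andP [wy' _].
  by split=> //; rewrite se.
have zy : z != y.
  apply/eqP => ezy; move: yL; rewrite -ezy.
  by have := mem_last v1 u''; rewrite !inE mem_rcons !inE => /orP [] ->; rewrite ?orbT.
have Nw : nbhd e w = [set z; y].
  apply/eqP; rewrite eq_sym eqEcard cards2 zy dw andbT.
  by apply/subsetP => q; rewrite !inE => /orP [] /eqP ->.
have wL : w \in v1 :: rcons u'' w by rewrite inE mem_rcons mem_head orbT.
have xw : x != w.
  by apply/eqP => exw; move: xL; rewrite exw mem_cat wL.
have nxw : ~~ e x w.
  apply/negP => xw'; have : w \in nbhd e x by rewrite inE.
  rewrite Nx !inE => /orP [] /eqP ewv.
  - by move: uL; rewrite ewv /= mem_rcons mem_head.
  - by move: yL; rewrite -ewv wL.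
have := d2 _ _ xw nxw; rewrite Nx Nw => h.
have : #|[set v1; y] :|: [set z; y]| <= 3.
  apply: leq_trans (card3 v1 y z); apply: subset_leq_card; apply/subsetP => q.
  by rewrite !inE => /orP [] /orP [] ->; rewrite ?orbT.
by move=> h'; have := leq_trans h h'.
Qed.
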